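(* For any strategy profile $g$, any player $i$, any $t$, any $(a_{1:t-1},x^i_{1:t},a^i_t)$ of positive probability under $g$, and any $(\tilde x_t,\tilde a_t)\in\mathcal X\times\mathcal A$, $$P^g(X_t=\tilde x_t,A_t=\tilde a_t\mid a_{1:t-1},x^i_{1:t},a^i_t)=\mathbf 1\{\tilde x^i_t=x^i_t,\tilde a^i_t=a^i_t\}\,P^{g^{-i}}(X^{-i}_t=\tilde x^{-i}_t,A^{-i}_t=\tilde a^{-i}_t\mid a_{1:t-1}),$$ so this conditional probability depends on the private history only through $x^i_t$, and on the profile only through $g^{-i}$.
   Context: Model: players $\mathcal N=\{1,\dots,N\}$, horizon $\mathcal T=\{1,\dots,T\}$, finite type sets $\mathcal X^i$ and action sets $\mathcal A^i$, $\mathcal X=\times_i\mathcal X^i$, $\mathcal A=\times_i\mathcal A^i$. Types evolve as $P(x_1)=\prod_iQ^i_1(x^i_1)$ and $P(x_{t+1}\mid x_{1:t},a_{1:t})=\prod_iQ^i_{t+1}(x^i_{t+1}\mid x^i_t,a_t)$ for known kernels (each may depend on the full action profile). Player $i$ privately observes its own types and all actions are public; a strategy $g^i$ specifies $g^i_t(\cdot\mid a_{1:t-1},x^i_{1:t})\in\mathcal P(\mathcal A^i)$, and players randomize independently given their information. $P^g$ denotes probability under profile $g$; $-i$ denotes all players except $i$; $P^{g^{-i}}(\cdot\mid a_{1:t-1})$ denotes a conditional probability of the other players' current types and actions given the public history which depends only on $g^{-i}$. *)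

(* Defs.v *)
From HB Require Import structures.
From mathcomp Require Import all_boot all_order all_algebra.
Set Implicit Arguments. Unset Strict Implicit. Unset Printing Implicit Defensive.
Import Order.TTheory GRing.Theory Num.Theory.
Local Open Scope ring_scope.

Section Game.
Variables (R : realFieldType) (N : nat) (X A : 'I_N -> finType).

Local Notation xprof := {dffun forall i : 'I_N, X i}.
Local Notation aprof := {dffun forall i : 'I_N, A i}.

(* Q1 i x = Q^i_1(x);  Qk s i x a x' = Q^i_s(x' | x, a)  (s >= 2) *)
Definition init_kernel := forall i : 'I_N, X i -> R.
Definition trans_kernel := nat -> forall i : 'I_N, X i -> aprof -> X i -> R.
(* g i s ah xh ai = g^i_s(ai | a_{1:s-1} = ah, x^i_{1:s} = xh) *)
Definition strategy_profile :=
  forall i : 'I_N, nat -> seq aprof -> seq (X i) -> A i -> R.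

Definition kernels_ok (Q1 : init_kernel) (Q : trans_kernel) : Prop :=
  (forall i x, 0 <= Q1 i x) /\ (forall i, \sum_(x : X i) Q1 i x = 1) /\
  (forall s i x a x', 0 <= Q s i x a x') /\
  (forall s i x a, \sum_(x' : X i) Q s i x a x' = 1).

Definition strategy_ok (g : strategy_profile) : Prop :=
  (forall i s ah xh ai, 0 <= g i s ah xh ai) /\
  (forall i s ah xh, \sum_(ai : A i) g i s ah xh ai = 1).

Unset Implicit Arguments.
Variables (Q1 : init_kernel) (Q : trans_kernel).
Set Implicit Arguments.

(* trajectories of the first t stages: (x_1..x_t, a_1..a_t); index s : 'I_t is time s+1 *)
Definition traj (t : nat) := (t.-tuple xprof * t.-tuple aprof)%type.

(* P(x_{s+1} | x_{1:s}, a_{1:s}) = prod_i Q^i_{s+1}(x^i_{s+1} | x^i_s, a_s) *)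
Definition type_step (t : nat) (tr : traj t) (s : 'I_t) : R :=
  let x := tnth tr.1 s in
  if (s == 0 :> nat) then \prod_(i < N) Q1 i (x i)
  else let xp := nth x tr.1 s.-1 in
       let ap := nth (tnth tr.2 s) tr.2 s.-1 in
       \prod_(i < N) Q s.+1 i (xp i) ap (x i).

(* players randomize independently given own information *)
Definition action_step (g : strategy_profile) (t : nat) (tr : traj t) (s : 'I_t) : R :=
  \prod_(i < N) g i s.+1 (take s tr.2) [seq fun_of_fin y i | y <- take s.+1 tr.1]
                  (tnth tr.2 s i).

Definition law (g : strategy_profile) (t : nat) (tr : traj t) : R :=
  \prod_(s < t) (type_step tr s * action_step g tr s).

Definition Pr (g : strategy_profile) (t : nat) (E : pred (traj t)) : R :=
  \sum_(tr : traj t | E tr) law g tr.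

Definition condPr (g : strategy_profile) (t : nat) (E C : pred (traj t)) : R :=
  Pr g (predI E C) / Pr g C.

(* the element at time t (1-based) of s exists and satisfies p *)
Definition at_time {T : Type} (s : seq T) (t : nat) (p : T -> bool) : bool :=
  [seq p y | y <- drop t.-1 s] == [:: true].

Definition pub_event (t : nat) (ah : seq aprof) : pred (traj t) :=
  fun tr => take t.-1 tr.2 == ah.

Definition priv_event (t : nat) (i : 'I_N) (ah : seq aprof) (xh : seq (X i))
    (ai : A i) : pred (traj t) :=
  fun tr => [&& take t.-1 tr.2 == ah,
               [seq fun_of_fin y i | y <- tr.1] == xh &
               at_time tr.2 t (fun a => a i == ai)].

Definition cur_event (t : nat) (xt : xprof) (acur : aprof) : pred (traj t) :=
  fun tr => at_time tr.1 t (fun x => x == xt) && at_time tr.2 t (fun a => a == acur).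

Definition others_event (t : nat) (i : 'I_N) (xt : xprof) (acur : aprof)
    : pred (traj t) :=
  fun tr => at_time tr.1 t (fun x => [forall j, (j != i) ==> (x j == xt j)]) &&
            at_time tr.2 t (fun a => [forall j, (j != i) ==> (a j == acur j)]).

End Game.

Notation xprof X := {dffun forall i, X i}.
Notation aprof A := {dffun forall i, A i}.

Arguments pub_event {N X A} t ah _.
Arguments priv_event {N X A} t i ah xh ai _.
Arguments cur_event {N X A} t xt acur _.
Arguments others_event {N X A} t i xt acur _.

(* Main.v *)
Require Import Defs.
From HB Require Import structures.
From mathcomp Require Import all_boot all_order all_algebra zify.
Import Order.TTheory GRing.Theory Num.Theory.
Set Implicit Arguments. Unset Strict Implicit. Unset Printing Implicit Defensive.


Section Mix.
Variables (N : nat) (i : 'I_N).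

Definition pmerge (T : 'I_N -> finType) (f f' : {dffun forall j, T j})
  : {dffun forall j, T j} := [ffun j => if j == i then f j else f' j].

Lemma pmergeE T f f' j : @pmerge T f f' j = if j == i then f j else f' j.
Proof. by rewrite ffunE. Qed.

Lemma pmerge_id T f : @pmerge T f f = f.
Proof. by apply/ffunP => j; rewrite pmergeE; case: ifP. Qed.

Lemma pmerge_inv T f f' : @pmerge T (pmerge f f') (pmerge f' f) = f.
Proof. by apply/ffunP => j; rewrite !pmergeE; case: (j == i). Qed.

Lemma pmerge_pair T f f' h :
  (@pmerge T f f' == h) && (pmerge f' f == h) = (f == h) && (f' == h).
Proof.
apply/idP/idP.
  case/andP => /eqP H1 /eqP H2; apply/andP; split; apply/eqP/ffunP => j.
    case: (boolP (j == i)) => Hj.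
      by rewrite -H1 pmergeE Hj.
    by rewrite -H2 pmergeE (negbTE Hj).
  case: (boolP (j == i)) => Hj.
    by rewrite -H2 pmergeE Hj.
  by rewrite -H1 pmergeE (negbTE Hj).
by case/andP => /eqP -> /eqP ->; rewrite pmerge_id eqxx.
Qed.

Definition mixs (T : 'I_N -> finType) (u v : seq {dffun forall j, T j}) :=
  map (fun p => pmerge p.1 p.2) (zip u v).

Lemma size_mixs T u v : size u = size v -> size (@mixs T u v) = size u.
Proof. by move=> H; rewrite size_map size_zip H minnn. Qed.

Lemma nth_mixs T d d1 d2 u v k : size u = size v -> k < size u ->
  nth d (@mixs T u v) k = pmerge (nth d1 u k) (nth d2 v k).
Proof.
move=> Hs Hk; rewrite (nth_map (d1, d2)); last by rewrite size_zip -Hs minnn.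
by rewrite nth_zip.
Qed.

Lemma take_mixs T n u v : take n (@mixs T u v) = mixs (take n u) (take n v).
Proof.
elim: u v n => [|x u IH] [|y v] [|n] //=.
by rewrite /mixs /= -/(mixs _ _) IH.
Qed.

Lemma mixs_id T u : @mixs T u u = u.
Proof. by elim: u => //= x u IH; rewrite /mixs /= -/(mixs _ _) IH pmerge_id. Qed.

Lemma mixs_inv T u v : size u = size v -> @mixs T (mixs u v) (mixs v u) = u.
Proof.
elim: u v => [|x u IH] [|y v] //= [] Hs.
by rewrite /mixs /= -!/(mixs _ _) IH // pmerge_inv.
Qed.

Lemma mixs_pair T u v w : size u = size v ->
  (@mixs T v u == w) && (mixs u v == w) = (u == w) && (v == w).
Proof.
elim: u v w => [|x u IH] [|y v] //= w [] Hs.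
case: w => [|z w]; first by [].
rewrite /mixs /= -!/(mixs _ _) !eqseq_cons.
move: (pmerge_pair y x z) (IH v w Hs).
by case: (pmerge y x == z); case: (pmerge x y == z); case: (mixs v u == w); case: (mixs u v == w); case: (x==z); case: (y==z); case: (u==w); case: (v==w).
Qed.

Lemma map_mixs_l T B (p : _ -> B) u v :
  (forall f f', p (@pmerge T f f') = p f) -> size u = size v ->
  map p (mixs u v) = map p u.
Proof.
move=> Hp; elim: u v => [|x u IH] [|y v] //= [] Hs.
by rewrite /mixs /= -!/(mixs _ _) Hp IH.
Qed.

Lemma map_mixs_r T B (p : _ -> B) u v :
  (forall f f', p (@pmerge T f f') = p f') -> size u = size v ->
  map p (mixs u v) = map p v.
Proof.
move=> Hp; elim: u v => [|x u IH] [|y v] //= [] Hs.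
by rewrite /mixs /= -!/(mixs _ _) Hp IH.
Qed.

End Mix.

Section Traj.
Variables (R : realFieldType) (N : nat) (X A : 'I_N -> finType).
Unset Implicit Arguments.
Variables (Q1 : init_kernel R X) (Q : trans_kernel R X A) (i : 'I_N).
Set Implicit Arguments.

Definition mix t (a b : traj X A t) : traj X A t :=
  (map_tuple (fun p => pmerge i p.1 p.2) (zip_tuple a.1 b.1),
   map_tuple (fun p => pmerge i p.1 p.2) (zip_tuple a.2 b.2)).

Lemma mix1 t (a b : traj X A t) : val (mix a b).1 = mixs i a.1 b.1.
Proof. by []. Qed.
Lemma mix2 t (a b : traj X A t) : val (mix a b).2 = mixs i a.2 b.2.
Proof. by []. Qed.

Lemma mix_inv t (a b : traj X A t) : mix (mix a b) (mix b a) = a.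
Proof.
case: a b => [a1 a2] [b1 b2]; rewrite /mix /=; congr pair; apply: val_inj => /=.
  by apply: (mixs_inv i); rewrite !size_tuple.
by apply: (mixs_inv i); rewrite !size_tuple.
Qed.

Definition fac (h : strategy_profile R X A) t (tr : traj X A t) (s : 'I_t) (j : 'I_N) : R :=
  ((if (s == 0 :> nat) then Q1 j (tnth tr.1 s j)
   else Q s.+1 j (nth (tnth tr.1 s) tr.1 s.-1 j) (nth (tnth tr.2 s) tr.2 s.-1)
          (tnth tr.1 s j)) *
  h j s.+1 (take s tr.2) [seq fun_of_fin y j | y <- take s.+1 tr.1] (tnth tr.2 s j))%R.

Lemma lawE h t (tr : traj X A t) :
  law Q1 Q h tr = (\prod_(j < N) \prod_(s < t) fac h tr s j)%R.
Proof.
rewrite /law exchange_big; apply: eq_bigr => s _.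
rewrite /type_step /action_step /fac /=.
by case: (s == 0 :> nat); rewrite -big_split.
Qed.


Section MixFac.
Variables (h : strategy_profile R X A) (t : nat) (a b : traj X A t).
Hypothesis Hab : take t.-1 a.2 = take t.-1 b.2.

Lemma nth_mix1 k d d' j : (k < t)%N ->
  nth d (mix a b).1 k j = nth d' (if j == i then a else b).1 k j.
Proof.
move=> Hk; rewrite mix1 (nth_mixs i d d' d') ?size_tuple // pmergeE.
by case: (j == i).
Qed.

Lemma nth_mix2 k d d' j : (k < t)%N ->
  nth d (mix a b).2 k j = nth d' (if j == i then a else b).2 k j.
Proof.
move=> Hk; rewrite mix2 (nth_mixs i d d' d') ?size_tuple // pmergeE.
by case: (j == i).
Qed.

Lemma nth_ab k d : (k < t.-1)%N -> nth d a.2 k = nth d b.2 k.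
Proof. by move=> Hk; rewrite -(nth_take d Hk) Hab nth_take. Qed.

Lemma nth_mix2_pub k d d' : (k < t.-1)%N -> nth d (mix a b).2 k = nth d' a.2 k.
Proof.
move=> Hk; have Hk' : (k < t)%N by apply: (leq_trans Hk); rewrite leq_pred.
rewrite mix2 (nth_mixs i d d' d') ?size_tuple // -(nth_ab _ Hk).
by rewrite pmerge_id.
Qed.

Lemma take_ab s : (s <= t.-1)%N -> take s a.2 = take s b.2.
Proof. by move=> Hs; rewrite -(take_takel _ Hs) Hab take_takel. Qed.

Lemma take_mix2 s : (s <= t.-1)%N -> take s (mix a b).2 = take s a.2.
Proof. by move=> Hs; rewrite mix2 take_mixs -(take_ab Hs) mixs_id. Qed.

Lemma map_mix1 j s :
  [seq fun_of_fin y j | y <- take s (mix a b).1] =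
  [seq fun_of_fin y j | y <- take s (if j == i then a else b).1].
Proof.
rewrite !map_take mix1; congr take.
case: (boolP (j == i)) => Hj.
  by apply: map_mixs_l; [move=> f f'; rewrite pmergeE Hj | rewrite !size_tuple].
by apply: map_mixs_r; [move=> f f'; rewrite pmergeE (negbTE Hj) | rewrite !size_tuple].
Qed.

Lemma fac_mix (s : 'I_t) j :
  fac h (mix a b) s j = fac h (if j == i then a else b) s j.
Proof.
have Hst : (s < t)%N := ltn_ord s.
set c := if j == i then a else b.
have Hc : take t.-1 c.2 = take t.-1 a.2 by rewrite /c; case: (j == i).
rewrite /fac.
set x0 := tnth a.1 s; set a0 := tnth a.2 s.
rewrite !(tnth_nth x0) !(tnth_nth a0).
have Hs1 : (s.-1 < t)%N by apply: leq_ltn_trans Hst; rewrite leq_pred.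
rewrite (nth_mix1 _ (nth x0 c.1 s) _ Hs1) !(nth_mix1 _ x0 _ Hst) -/c.
rewrite (nth_mix2 _ a0 _ Hst) -/c.
have Hs : (s <= t.-1)%N by lia.
rewrite (take_mix2 Hs) map_mix1 -/c.
have -> : take s a.2 = take s c.2.
  by rewrite -(take_takel _ Hs) -Hc take_takel.
case: ifP => Hs0 //.
have Hk : (s.-1 < t.-1)%N.
  by move/negbT: Hs0 => Hs0; lia.
rewrite (nth_mix2_pub _ (nth a0 c.2 s) Hk).
have -> : nth (nth a0 c.2 s) a.2 s.-1 = nth (nth a0 c.2 s) c.2 s.-1.
  by rewrite -(nth_take _ Hk) -Hc nth_take.
done.
Qed.

End MixFac.

Lemma fac_eq h h' t (c : traj X A t) s j : h' j = h j -> fac h' c s j = fac h c s j.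
Proof. by move=> E; rewrite /fac E. Qed.

Lemma law_swap (g g' : strategy_profile R X A) t (a b : traj X A t) :
  (forall j, j != i -> g' j = g j) -> take t.-1 a.2 = take t.-1 b.2 ->
  (law Q1 Q g a * law Q1 Q g' b = law Q1 Q g' (mix b a) * law Q1 Q g (mix a b))%R.
Proof.
move=> Hg Hab.
rewrite !lawE.
have E1 : forall (h : strategy_profile R X A) (u v : traj X A t),
    take t.-1 u.2 = take t.-1 v.2 ->
    (\prod_(j < N) \prod_(s < t) fac h (mix u v) s j =
     \prod_(j < N) \prod_(s < t) fac h (if j == i then u else v) s j)%R.
  by move=> h u v Huv; apply: eq_bigr => j _; apply: eq_bigr => s _; apply: fac_mix.
rewrite (E1 _ _ _ Hab) (E1 _ _ _ (esym Hab)).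
have D : forall F : 'I_N -> R, (\prod_(j < N) F j = F i * \prod_(j < N | j != i) F j)%R.
  by move=> F; rewrite (bigD1 i).
rewrite !D eqxx.
have E2 : forall u v : traj X A t,
   (\prod_(j < N | j != i) \prod_(s < t) fac g' (if j == i then u else v) s j =
    \prod_(j < N | j != i) \prod_(s < t) fac g v s j)%R.
  move=> u v; apply: eq_bigr => j Hj; rewrite (negbTE Hj).
  by apply: eq_bigr => s _; apply: fac_eq; apply: Hg.
have E3 : forall u v : traj X A t,
   (\prod_(j < N | j != i) \prod_(s < t) fac g (if j == i then u else v) s j =
    \prod_(j < N | j != i) \prod_(s < t) fac g v s j)%R.
  by move=> u v; apply: eq_bigr => j Hj; rewrite (negbTE Hj).
have E4 : forall u : traj X A t,
   (\prod_(j < N | j != i) \prod_(s < t) fac g' u s j =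
    \prod_(j < N | j != i) \prod_(s < t) fac g u s j)%R.
  move=> u; apply: eq_bigr => j Hj.
  by apply: eq_bigr => s _; apply: fac_eq; apply: Hg.
rewrite E2 E3 E4.
set p1 := (\prod_(s < t) fac g a s i)%R.
set p2 := (\prod_(s < t) fac g' b s i)%R.
set q1 := (\prod_(j < N | j != i) \prod_(s < t) fac g a s j)%R.
set q2 := (\prod_(j < N | j != i) \prod_(s < t) fac g b s j)%R.
by rewrite mulrACA [(p1 * p2)%R]mulrC mulrACA.
Qed.

Lemma Pr_pair (g g' : strategy_profile R X A) t (E1 E2 : pred (traj X A t)) :
  (Pr Q1 Q g E1 * Pr Q1 Q g' E2 =
   \sum_(p | E1 p.1 && E2 p.2) law Q1 Q g p.1 * law Q1 Q g' p.2)%R.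
Proof.
rewrite /Pr mulr_suml.
under eq_bigr do rewrite mulr_sumr.
by rewrite pair_big.
Qed.

Lemma Pr_swap (g g' : strategy_profile R X A) t (E1 E2 E3 E4 : pred (traj X A t)) ah :
  (forall j, j != i -> g' j = g j) ->
  (forall tr, E1 tr -> pub_event t ah tr) -> (forall tr, E2 tr -> pub_event t ah tr) ->
  (forall u v, (E1 (mix v u) && E2 (mix u v)) = (E3 u && E4 v)) ->
  (Pr Q1 Q g E1 * Pr Q1 Q g' E2 = Pr Q1 Q g' E3 * Pr Q1 Q g E4)%R.
Proof.
move=> Hg H1 H2 H12.
rewrite !Pr_pair.
pose phi (p : traj X A t * traj X A t) := (mix p.2 p.1, mix p.1 p.2).
have phiK : involutive phi.
  by case=> u v; rewrite /phi /= !mix_inv.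
rewrite (reindex_inj (inv_inj phiK)) /=.
apply: eq_big => [[u v] /=|[u v] /= /andP[Ha Hb]]; first by rewrite H12.
have Hta : take t.-1 (mix v u).2 = ah by apply/eqP; apply: H1.
have Htb : take t.-1 (mix u v).2 = ah by apply/eqP; apply: H2.
rewrite (law_swap Hg); last by rewrite Hta Htb.
by rewrite !mix_inv.
Qed.

End Traj.

Lemma at_timeE T (s : seq T) n (p : T -> bool) x0 :
  size s = n.+1 -> at_time s n.+1 p = p (nth x0 s n).
Proof.
move=> Hs; rewrite /at_time /= (drop_nth x0) ?Hs // drop_oversize ?Hs //=.
by rewrite eqseq_cons andbT; case: (p _).
Qed.

Section Misc.
Variables (N : nat) (i : 'I_N) (T : 'I_N -> finType).

Lemma pmerge_eq (f f' h : {dffun forall j, T j}) :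
  (pmerge i f f' == h) = (f i == h i) && [forall j, (j != i) ==> (f' j == h j)].
Proof.
apply/eqP/andP.
  move=> <-; rewrite pmergeE eqxx; split => //; apply/forallP => j.
  by apply/implyP => Hj; rewrite pmergeE (negbTE Hj).
case=> /eqP H1 /forallP H2; apply/ffunP => j; rewrite pmergeE.
case: (boolP (j == i)) => Hj; first by move/eqP: Hj => ->.
by move: (H2 j); rewrite Hj => /eqP.
Qed.

Lemma pmerge_others (f f' h : {dffun forall j, T j}) :
  [forall j, (j != i) ==> (pmerge i f f' j == h j)] =
  [forall j, (j != i) ==> (f' j == h j)].
Proof.
apply: eq_forallb => j; case: (boolP (j == i)) => Hj //=.
by rewrite pmergeE (negbTE Hj).
Qed.

Lemma pmerge_i (f f' : {dffun forall j, T j}) : pmerge i f f' i = f i.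
Proof. by rewrite pmergeE eqxx. Qed.
End Misc.

Section Main.
Variables (R : realFieldType) (N : nat) (X A : 'I_N -> finType).
Unset Implicit Arguments.
Variables (Q1 : init_kernel R X) (Q : trans_kernel R X A) (i : 'I_N).
Set Implicit Arguments.
Local Open Scope ring_scope.

Lemma law_ge0 g t (tr : traj X A t) : kernels_ok Q1 Q -> strategy_ok g ->
  0 <= law Q1 Q g tr.
Proof.
move=> [HQ1 [_ [HQ _]]] [Hg _]; rewrite lawE.
apply: prodr_ge0 => j _; apply: prodr_ge0 => s _; rewrite /fac.
by apply: mulr_ge0 => //; case: ifP.
Qed.

Lemma Pr_mono g t (E F : pred (traj X A t)) : kernels_ok Q1 Q -> strategy_ok g ->
  (forall tr, E tr -> F tr) -> Pr Q1 Q g E <= Pr Q1 Q g F.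
Proof.
move=> HK HG HEF; rewrite /Pr [X in X <= _]big_mkcond [X in _ <= X]big_mkcond.
apply: ler_sum => tr _; case HE: (E tr); first by rewrite (HEF _ HE).
by case: (F tr) => //; apply: law_ge0.
Qed.

End Main.


Unset Implicit Arguments.
Local Open Scope ring_scope.

Theorem claim4 (R : realFieldType) (N : nat) (X A : 'I_N -> finType) (T : nat)
    (Q1 : init_kernel R X) (Q : trans_kernel R X A)
    (g : strategy_profile R X A) (i : 'I_N) (t : nat)
    (ah : seq (aprof A)) (xh : seq (X i)) (ai : A i)
    (xt : xprof X) (acur : aprof A) :
  kernels_ok Q1 Q -> strategy_ok g ->
  (1 <= t <= T)%N -> size ah = t.-1 -> size xh = t ->
  0 < Pr Q1 Q g (priv_event t i ah xh ai) ->
  condPr Q1 Q g (cur_event t xt acur) (priv_event t i ah xh ai)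
    = ((drop t.-1 xh == [:: xt i]) && (acur i == ai))%:R
      * condPr Q1 Q g (others_event t i xt acur) (pub_event t ah)
  /\ (forall g' : strategy_profile R X A, strategy_ok g' ->
        (forall j, j != i -> g' j = g j) ->
        0 < Pr Q1 Q g' (pub_event t ah) ->
        condPr Q1 Q g' (others_event t i xt acur) (pub_event t ah)
        = condPr Q1 Q g (others_event t i xt acur) (pub_event t ah)).
Proof.
move=> HK HG /andP[Ht1 _] Hah Hxh Hpos.
have [n Hn] : exists n, t = n.+1 by exists t.-1; lia.
rewrite {}Hn /= in Hah Hxh Hpos *.
have Hpp : forall tr, priv_event n.+1 i ah xh ai tr -> pub_event n.+1 ah tr.
  by move=> tr; rewrite /priv_event /pub_event => /and3P[].
have Ppub : (0 < Pr Q1 Q g (pub_event n.+1 ah))%R.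
  by apply: (lt_le_trans Hpos); apply: (Pr_mono HK HG Hpp).
have curE : forall tr : traj X A n.+1, cur_event n.+1 xt acur tr =
    (nth xt tr.1 n == xt) && (nth acur tr.2 n == acur).
  by move=> tr; rewrite /cur_event (at_timeE _ xt) ?size_tuple // (at_timeE _ acur) ?size_tuple.
have privE : forall tr : traj X A n.+1, priv_event n.+1 i ah xh ai tr =
    [&& take n tr.2 == ah, [seq fun_of_fin y i | y <- tr.1] == xh & nth acur tr.2 n i == ai].
  by move=> tr; rewrite /priv_event (at_timeE _ acur) ?size_tuple.
have othE : forall tr : traj X A n.+1, others_event n.+1 i xt acur tr =
    [forall j, (j != i) ==> (nth xt tr.1 n j == xt j)] &&
    [forall j, (j != i) ==> (nth acur tr.2 n j == acur j)].
  by move=> tr; rewrite /others_event (at_timeE _ xt) ?size_tuple // (at_timeE _ acur) ?size_tuple.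
have pubE : forall tr : traj X A n.+1, pub_event n.+1 ah tr = (take n tr.2 == ah) by [].
have nm1 : forall u v : traj X A n.+1,
    nth xt (mix i v u).1 n = pmerge i (nth xt v.1 n) (nth xt u.1 n).
  by move=> u v; rewrite mix1 (nth_mixs i xt xt xt) ?size_tuple.
have nm2 : forall u v : traj X A n.+1,
    nth acur (mix i v u).2 n = pmerge i (nth acur v.2 n) (nth acur u.2 n).
  by move=> u v; rewrite mix2 (nth_mixs i acur acur acur) ?size_tuple.
have mm : forall u v : traj X A n.+1,
    [seq fun_of_fin y i | y <- (mix i v u).1] = [seq fun_of_fin y i | y <- v.1].
  move=> u v; rewrite mix1; apply: map_mixs_l; last by rewrite !size_tuple.
  by move=> f f'; rewrite pmerge_i.
have tm : forall u v : traj X A n.+1,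
    (take n (mix i v u).2 == ah) && (take n (mix i u v).2 == ah) =
    (take n u.2 == ah) && (take n v.2 == ah).
  by move=> u v; rewrite !mix2 !take_mixs mixs_pair // !size_take !size_tuple.
split.
  rewrite /condPr.
  case Hb: ((drop n xh == [:: xt i]) && (acur i == ai)).
    move/andP: Hb => [Hd /eqP Hai].
    have H12 : forall u v : traj X A n.+1,
      (predI (cur_event n.+1 xt acur) (priv_event n.+1 i ah xh ai) (mix i v u) &&
       pub_event n.+1 ah (mix i u v)) =
      (predI (others_event n.+1 i xt acur) (pub_event n.+1 ah) u &&
       priv_event n.+1 i ah xh ai v).
      move=> u v; rewrite /= curE !privE othE !pubE nm1 nm2 mm !pmerge_eq !pmerge_i.
      have HM : ([seq fun_of_fin y i | y <- v.1] == xh) -> (nth xt v.1 n i == xt i).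
        move/eqP => Hm.
        have Hx : drop n xh = [:: nth (xt i) xh n].
          by rewrite (drop_nth (xt i)) ?Hxh // drop_oversize ?Hxh.
        move/eqP: Hd; rewrite Hx => -[<-].
        by rewrite -Hm (nth_map xt) ?size_tuple.
      rewrite Hai; move: (tm u v) HM.
      case: (take n (mix i v u).2 == ah); case: (take n (mix i u v).2 == ah);
      case: (take n u.2 == ah); case: (take n v.2 == ah);
      case: ([seq fun_of_fin y i | y <- v.1] == xh); case: (nth xt v.1 n i == xt i);
      case: [forall j, (j != i) ==> (nth xt u.1 n j == xt j)];
      case: [forall j, (j != i) ==> (nth acur u.2 n j == acur j)];
      case: (nth acur v.2 n i == ai) => //=; by move=> _ /(_ isT).
    have H1 : forall tr, predI (cur_event n.+1 xt acur) (priv_event n.+1 i ah xh ai) tr ->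
        pub_event n.+1 ah tr.
      by move=> tr /andP[_ /Hpp].
    have Hsw := Pr_swap Q1 Q (i:=i) (g:=g) (g':=g) (fun _ _ => erefl) H1 (fun _ H => H) H12.
    by rewrite mul1r; apply/eqP; rewrite eqr_div ?lt0r_neq0 // Hsw.
  rewrite {1}/Pr big_pred0; last first.
    move=> tr /=; rewrite curE privE.
    apply/negP => /andP[/andP[/eqP Hx /eqP Ha] /and3P[_ /eqP Hm /eqP Hai]].
    move: Hb; rewrite -Hx -Ha Hai eqxx andbT -Hm -map_drop (drop_nth xt) ?size_tuple //.
    by rewrite drop_oversize ?size_tuple //= eqxx.
  by rewrite !mul0r.
move=> g' HG' Hg' Ppub'.
rewrite /condPr.
have H1 : forall tr, predI (others_event n.+1 i xt acur) (pub_event n.+1 ah) tr ->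
    pub_event n.+1 ah tr.
  by move=> tr /andP[].
have H12 : forall u v : traj X A n.+1,
    (predI (others_event n.+1 i xt acur) (pub_event n.+1 ah) (mix i v u) &&
     pub_event n.+1 ah (mix i u v)) =
    (predI (others_event n.+1 i xt acur) (pub_event n.+1 ah) u &&
     pub_event n.+1 ah v).
  move=> u v; rewrite /= !othE !pubE nm1 nm2 !pmerge_others.
  move: (tm u v).
  case: (take n (mix i v u).2 == ah); case: (take n (mix i u v).2 == ah);
  case: (take n u.2 == ah); case: (take n v.2 == ah);
  case: [forall j, (j != i) ==> (nth xt u.1 n j == xt j)];
  by case: [forall j, (j != i) ==> (nth acur u.2 n j == acur j)].
have Hsw := Pr_swap Q1 Q (i:=i) (g:=g) (g':=g') Hg' H1 (fun _ H => H) H12.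
by apply/eqP; rewrite eqr_div ?lt0r_neq0 // Hsw.
Qed.
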